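(* Let $c,d$ be positive integers and define $\phi_{c,d}:\mathbb Z_{>0}^2\to\mathbb Z_{>0}^2$ by $\phi_{c,d}(s,t)=(c,d)$ if $s=t$, $(s-t,d)$ if $s>t$, and $(c,t-s)$ if $s<t$. Let $(c_1,d_1)=(c,d)$ and $(c_{k+1},d_{k+1})=\phi_{c,d}(c_k,d_k)$ for $k\ge1$. Put $e=c/\gcd(c,d)$, $e'=d/\gcd(c,d)$ and $p=e+e'-1$. Then $(c_{k+p},d_{k+p})=(c_k,d_k)$ for all $k\ge1$. Moreover, for arbitrary integers $\tilde c,\tilde d$, define for $k\ge2$: $\mu_k=\min\{c_k,d_k\}$ and $\nu_k=\tilde c+\tilde d$ if $c_k=d_k$, $\nu_k=\tilde d$ if $c_k>d_k$, $\nu_k=\tilde c$ if $c_k<d_k$. Then $$\sum_{k=2}^{p+1}\mu_k=\mathrm{lcm}(c,d),\qquad \sum_{k=2}^{p+1}\nu_k=e\tilde d+e'\tilde c.$$ *)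

(* Defs.v *)
From mathcomp Require Import all_boot all_order all_algebra.
Set Implicit Arguments. Unset Strict Implicit. Unset Printing Implicit Defensive.
Import GRing.Theory Num.Theory.

Definition phi (c d : nat) (st : nat * nat) : nat * nat :=
  let: (s, t) := st in
  if s == t then (c, d)
  else if t < s then (s - t, d) else (c, t - s).

(* (c_k, d_k) for k >= 1: (c_1,d_1) = (c,d), (c_{k+1},d_{k+1}) = phi (c_k,d_k).
   (Index 0 is not used; it coincides with index 1.) *)
Definition cdseq (c d k : nat) : nat * nat := iter k.-1 (phi c d) (c, d).

Definition ck (c d k : nat) : nat := (cdseq c d k).1.
Definition dk (c d k : nat) : nat := (cdseq c d k).2.

Definition mu (c d k : nat) : nat := minn (ck c d k) (dk c d k).

Definition nu (c d : nat) (ct dt : int) (k : nat) : int :=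
  if ck c d k == dk c d k then (ct + dt)%R
  else if dk c d k < ck c d k then dt else ct.

(* Main.v *)
Require Import Defs.
From mathcomp Require Import all_boot all_order all_algebra.
From mathcomp Require Import zify ring.
Import GRing.Theory Num.Theory.

Lemma step_helper c x u : 0 < c -> u <= c - x %% c ->
  if u == c - x %% c then ((x + u) %% c = 0 /\ (x + u) %/ c = (x %/ c).+1)
  else ((x + u) %% c = x %% c + u /\ (x + u) %/ c = x %/ c).
Proof.
move=> hc hu.
have hr : x %% c < c by rewrite ltn_pmod.
have ex : x = x %/ c * c + x %% c by rewrite -divn_eq.
case: eqP => [hE|hE].
  have -> : x + u = (x %/ c).+1 * c by rewrite {1}ex hE mulSn; lia.
  by rewrite modnMl mulnK.
have hlt : x %% c + u < c by lia.
have -> : x + u = x %/ c * c + (x %% c + u) by rewrite {1}ex addnA.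
by rewrite modnMDl divnMDl // (modn_small hlt) (divn_small hlt) addn0.
Qed.

Definition Nx c d x := x + minn (c - x %% c) (d - x %% d).
Definition X c d j := iter j (Nx c d) 0.

Lemma phi_st c d x : 0 < c -> 0 < d ->
  phi c d (c - x %% c, d - x %% d) = (c - Nx c d x %% c, d - Nx c d x %% d).
Proof.
move=> hc hd; rewrite /phi /Nx /=.
set s := c - x %% c; set t := d - x %% d.
have hs : 0 < s by rewrite subn_gt0 ltn_pmod.
have ht : 0 < t by rewrite subn_gt0 ltn_pmod.
case: (ltngtP s t) => hst.
- have := step_helper c x s hc (leqnn s); rewrite eqxx => -[-> _].
  have := step_helper d x s hd (ltnW hst); rewrite (ltn_eqF hst) => -[-> _].
  by congr pair; rewrite /t; lia.
- have := step_helper d x t hd (leqnn t); rewrite eqxx => -[-> _].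
  have := step_helper c x t hc (ltnW hst); rewrite (ltn_eqF hst) => -[-> _].
  by congr pair; rewrite /s; lia.
- have := step_helper d x t hd (leqnn t); rewrite eqxx -hst => -[-> _].
  have := step_helper c x s hc (leqnn s); rewrite eqxx => -[-> _].
  by rewrite !subn0.
Qed.
Lemma iter_phi c d j : 0 < c -> 0 < d ->
  iter j (phi c d) (c, d) = (c - X c d j %% c, d - X c d j %% d).
Proof.
move=> hc hd; elim: j => [|j IH]; first by rewrite /X /= !mod0n !subn0.
by rewrite iterS IH phi_st.
Qed.

Lemma XS c d j : X c d j.+1 = Nx c d (X c d j).
Proof. by rewrite /X iterS. Qed.

Lemma NxC c d x : Nx c d x = Nx d c x.
Proof. by rewrite /Nx minnC. Qed.

Lemma div_step c d x : 0 < c -> 0 < d ->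
  Nx c d x %/ c = x %/ c + (c - x %% c <= d - x %% d).
Proof.
move=> hc hd; rewrite /Nx.
set s := c - x %% c; set t := d - x %% d.
case: leqP => hst.

  by have := step_helper c x s hc (leqnn s); rewrite eqxx => -[_ ->]; rewrite addn1.

have := step_helper c x t hc (ltnW hst); rewrite (ltn_eqF hst) => -[_ ->].
by rewrite addn0.
Qed.

Lemma mod_step c d x : 0 < c -> 0 < d ->
  c - x %% c = d - x %% d -> Nx c d x %% c = 0.
Proof.
move=> hc hd e; rewrite /Nx -e minnn.
by have := step_helper c x (c - x %% c) hc (leqnn _); rewrite eqxx => -[-> _].
Qed.

Lemma Nx_gt c d x : 0 < c -> 0 < d -> x < Nx c d x.
Proof.
move=> hc hd; rewrite /Nx -{1}(addn0 x) ltn_add2l leq_min !subn_gt0.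
by rewrite !ltn_pmod.
Qed.

Lemma Nx_shift c d x : Nx c d (x + lcmn c d) = Nx c d x + lcmn c d.
Proof.
rewrite /Nx.
have -> : (x + lcmn c d) %% c = x %% c.
  by rewrite -modnDmr (eqP (dvdn_lcml c d)) addn0.
have -> : (x + lcmn c d) %% d = x %% d.
  by rewrite -modnDmr (eqP (dvdn_lcmr c d)) addn0.
lia.
Qed.

Lemma Nx_le c d x y : 0 < c -> 0 < d -> x < y -> c %| y -> Nx c d x <= y.
Proof.
move=> hc hd hxy /dvdnP [q yq]; subst y.
have hq : x %/ c < q by rewrite ltn_divLR.
have ex : x = x %/ c * c + x %% c by rewrite -divn_eq.
have hr : x %% c < c by rewrite ltn_pmod.
apply: (@leq_trans (x + (c - x %% c))); first by rewrite leq_add2l geq_minl.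
have : (x %/ c).+1 * c <= q * c by rewrite leq_mul2r hq orbT.
rewrite mulSn; lia.
Qed.

Lemma X_shift c d j k : iter j (Nx c d) (k + lcmn c d) = iter j (Nx c d) k + lcmn c d.
Proof.
elim: j => [//|j IH]; by rewrite !iterS IH Nx_shift.
Qed.
Lemma Lfacts c d : 0 < c -> 0 < d ->
  lcmn c d = (c %/ gcdn c d) * d /\ lcmn c d = c * (d %/ gcdn c d).
Proof.
move=> hc hd; split; rewrite /lcmn.
  by rewrite divn_mulAC // dvdn_gcdl.
by rewrite muln_divA // dvdn_gcdr.
Qed.

Lemma X_main c d : 0 < c -> 0 < d ->
  let p := (c %/ gcdn c d + d %/ gcdn c d - 1)%N in
  X c d p = lcmn c d.
Proof.
move=> hc hd p.
set L := lcmn c d; set e := c %/ gcdn c d; set e' := d %/ gcdn c d.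
have [hLe hLe'] : L = e * d /\ L = c * e' by apply: Lfacts.
have hL0 : 0 < L by rewrite lcmn_gt0 hc hd.
have he : 0 < e by move: hL0; rewrite hLe muln_gt0 => /andP[].
have he' : 0 < e' by move: hL0; rewrite hLe' muln_gt0 => /andP[].
have hLc : L %/ c = e' by rewrite hLe' mulKn.
have hLd : L %/ d = e by rewrite hLe mulnK.
have pdef : p = (e + e' - 1)%N by [].
have hcL : c %| L by apply: dvdn_lcml.
have hLdv : forall y, (L %| y) = (c %| y) && (d %| y) by move=> y; apply: dvdn_lcm.
clearbody p L e e'.
have Fstep : forall x, Nx c d x %/ c + Nx c d x %/ d =
   x %/ c + x %/ d + (c - x %% c <= d - x %% d) + (d - x %% d <= c - x %% c).
  by move=> x; rewrite div_step // NxC div_step //; lia.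
have small : forall y, y < L -> y %/ c + y %/ d <= p - 1.
  move=> y hy.
  have h1 : y %/ c < e' by rewrite ltn_divLR // mulnC -hLe'.
  have h2 : y %/ d < e by rewrite ltn_divLR // -hLe.
  rewrite pdef; lia.
have claim : forall j, j < p -> X c d j < L /\ X c d j %/ c + X c d j %/ d = j.
  elim=> [|j IH] hj.
    by rewrite /X /= !div0n.
  have [hx hF] := IH (ltnW hj).
  rewrite XS.
  set x := X c d j in hx hF *.
  have hyL : Nx c d x <= L by apply: Nx_le.
  have hne : (c - x %% c == d - x %% d) = false.
    apply/negbTE/eqP => E.
    have m1 := mod_step c d x hc hd E.
    have m2 : Nx c d x %% d = 0 by rewrite NxC; apply: mod_step => //.
    have hdv : L %| Nx c d x by rewrite hLdv /dvdn m1 m2.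
    have hgt := Nx_gt c d x hc hd.
    have hle := dvdn_leq (leq_ltn_trans (leq0n x) hgt) hdv.
    have hyeq : Nx c d x = L by apply/eqP; rewrite eqn_leq hyL hle.
    have := Fstep x; rewrite hyeq hLc hLd -E leqnn hF.
    rewrite pdef in hj; move: hj; clear -he he'; lia.
  have hFy : Nx c d x %/ c + Nx c d x %/ d = j.+1.
    rewrite Fstep hF.
    move: hne; case: ltngtP => // _ _; rewrite /= addn0 addn1 //.
  split => //.
  rewrite ltn_neqAle hyL andbT; apply/eqP => hyeq.
  move: hFy; rewrite hyeq hLc hLd; rewrite pdef in hj; move: hj; clear -he he'; lia.
have hp : 0 < p by rewrite pdef; lia.
have [hx hF] : X c d p.-1 < L /\ X c d p.-1 %/ c + X c d p.-1 %/ d = p.-1 by apply: claim; rewrite ltn_predL.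
rewrite -(prednK hp) XS.
set x := X c d p.-1 in hx hF *.
have hyL : Nx c d x <= L by apply: Nx_le.
apply/eqP; rewrite eqn_leq hyL /=; rewrite leqNgt; apply/negP => hy.
have := small _ hy; rewrite Fstep hF.
have : (c - x %% c <= d - x %% d) || (d - x %% d <= c - x %% c) by apply: leq_total.
case/orP => -> H; move: H hp; clear; lia.
Qed.

Lemma X_le_S c d i : 0 < c -> 0 < d -> X c d i.-1 <= X c d i.
Proof. by move=> hc hd; case: i => [//|i]; rewrite XS ltnW // Nx_gt. Qed.

Lemma mu_eq c d k : 0 < c -> 0 < d -> 0 < k -> mu c d k = X c d k - X c d k.-1.
Proof.
move=> hc hd hk; rewrite /mu /ck /dk /cdseq -(prednK hk) XS /=.
by rewrite iter_phi // /Nx addKn.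
Qed.

Lemma nu_eq c d ct dt k : 0 < c -> 0 < d -> 0 < k ->
  nu c d ct dt k = (ct * ((X c d k %/ c)%:Z - (X c d k.-1 %/ c)%:Z)
                  + dt * ((X c d k %/ d)%:Z - (X c d k.-1 %/ d)%:Z))%R.
Proof.
move=> hc hd hk; rewrite /nu /ck /dk /cdseq -(prednK hk) XS /= iter_phi //=.
rewrite div_step // NxC div_step // !PoszD !(addrC (Posz (_ %/ _))) !addrK.
by case: ltngtP => _ /=; rewrite ?mulr1 ?mulr0 ?addr0 ?add0r.
Qed.

Theorem mainTheorem4 (c d : nat) (hc : 0 < c) (hd : 0 < d) (ct dt : int) :
  let e := c %/ gcdn c d in
  let e' := d %/ gcdn c d in
  let p := (e + e' - 1)%N in
  (forall k : nat, 1 <= k -> cdseq c d (k + p) = cdseq c d k) /\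
  (\sum_(2 <= k < p.+2) mu c d k)%N = lcmn c d /\
  (\sum_(2 <= k < p.+2) nu c d ct dt k)%R = (e%:Z * dt + e'%:Z * ct)%R.
Proof.
move=> e e' p.
have hX : X c d p = lcmn c d by apply: X_main.
have Xs : forall j, X c d (j + p) = X c d j + lcmn c d.
  by move=> j; rewrite /X iterD -/(X c d p) hX -(add0n (lcmn c d)) X_shift.
have [hLe hLe'] := Lfacts c d hc hd.
have modL : forall x, (x + lcmn c d) %% c = x %% c /\ (x + lcmn c d) %% d = x %% d.
  move=> x; split; rewrite -modnDmr.
    by rewrite (eqP (dvdn_lcml c d)) addn0.
  by rewrite (eqP (dvdn_lcmr c d)) addn0.
split.
  move=> k hk; rewrite /cdseq.
  have -> : (k + p).-1 = k.-1 + p by case: k hk.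
  rewrite !iter_phi // Xs.
  by have [-> ->] := modL (X c d k.-1).
split.
  have T1 : \sum_(2 <= k < p.+2) (X c d k - X c d k.-1) = X c d p.+1 - X c d 1.
    apply: (telescope_sumn_in (f := fun k => X c d k.-1)) => // i _.
    exact: X_le_S.
  have hp1 : X c d p.+1 = X c d 1 + lcmn c d by rewrite -add1n Xs.
  rewrite hp1 addKn in T1; rewrite -T1.
  apply: eq_big_nat => k /andP[hk _].
  by apply: mu_eq => //; apply: ltnW.
have T : forall G : nat -> int,
    (\sum_(2 <= k < p.+2) (G k - G k.-1))%R = (G p.+1 - G 1)%R.
  by move=> G; apply: (telescope_sumr_eq (fun k => G k.-1)).
rewrite (eq_big_nat _ _ (F2 := fun k => (ct * ((X c d k %/ c)%:Z - (X c d k.-1 %/ c)%:Z)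
                  + dt * ((X c d k %/ d)%:Z - (X c d k.-1 %/ d)%:Z))%R)); last first.
  by move=> k /andP[hk _]; apply: nu_eq => //; apply: ltnW.
rewrite big_split /= -!mulr_sumr !T.
have hp1 : X c d p.+1 = X c d 1 + lcmn c d by rewrite -add1n Xs.
rewrite hp1.
have -> : (X c d 1 + lcmn c d) %/ c = e' + X c d 1 %/ c.
  by rewrite hLe' mulnC addnC divnMDl.
have -> : (X c d 1 + lcmn c d) %/ d = e + X c d 1 %/ d.
  by rewrite hLe addnC divnMDl.
rewrite !PoszD !addrK.
by rewrite addrC mulrC [(ct * _)%R]mulrC.
Qed.
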